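(* Every irreflexive relation $R\subseteq\Sigma^*\times\Sigma^*$ that is left synchronous, and every irreflexive relation that is right synchronous, has a rational asymmetric partition.
   Context: A transducer over a finite alphabet $\Sigma$ has finitely many states, transitions labelled $x/y$ with $x,y\in\Sigma\cup\{\lambda\}$ ($\lambda$ the empty word), initial and final states; it realizes the set of input/output label pairs of its accepting computations. A relation is rational if it is realized by some transducer. A transducer is letter-to-letter if all labels are $\sigma/\tau$ with $\sigma,\tau\in\Sigma$. The product of relations is $R_1R_2=\{u_1u_2/v_1v_2 : u_1/v_1\in R_1,\ u_2/v_2\in R_2\}$. $R$ is left synchronous if it is a finite union of relations each of the form $S(A\times\{\lambda\})$ or $S(\{\lambda\}\times A)$, where $A\subseteq\Sigma^*$ is regular and $S$ is realized by a letter-to-letter transducer; it is right synchronous if it is a finite union of relations of the form $(A\times\{\lambda\})S$ or $(\{\lambda\}\times A)S$. A relation is irreflexive if it contains no pair $u/u$; a relation $A$ is asymmetric if $x/y\in A$ implies $y/x\notin A$. A rational asymmetric partition of an irreflexive relation $I$ is a partition $\{A,B\}$ of $I$ into two asymmetric rational relations. *)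

(* Defs.v *)
From mathcomp Require Import all_boot.
Set Implicit Arguments. Unset Strict Implicit. Unset Printing Implicit Defensive.

Section Rational.
Variable Sigma : finType.

Definition word := seq Sigma.
Definition wrel := word -> word -> Prop.

(* lambda is None; a letter a is Some a *)
Definition olab (x : option Sigma) : word :=
  if x is Some a then [:: a] else [::].

Record transducer := Transducer {
  tnst : nat;
  ttrans : 'I_tnst -> option Sigma -> option Sigma -> 'I_tnst -> bool;
  tinit : 'I_tnst -> bool;
  tfinal : 'I_tnst -> bool }.

Unset Implicit Arguments.
Inductive trun (T : transducer) : 'I_(tnst T) -> word -> word -> 'I_(tnst T) -> Prop :=
| trun_nil p : trun T p [::] [::] p
| trun_step p x y q u v r :
    @ttrans T p x y q -> trun T q u v r -> trun T p (olab x ++ u) (olab y ++ v) r.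

Set Implicit Arguments.
Definition realized (T : transducer) : wrel :=
  fun u v => exists p q, [/\ @tinit T p, @tfinal T q & trun T p u v q].

Definition rel_eq (R1 R2 : wrel) := forall u v, R1 u v <-> R2 u v.

Definition rational (R : wrel) := exists T : transducer, rel_eq R (realized T).

Definition letter_to_letter (T : transducer) :=
  forall p x y q, @ttrans T p x y q -> exists a b, x = Some a /\ y = Some b.

Definition ltl_realized (S : wrel) :=
  exists T : transducer, letter_to_letter T /\ rel_eq S (realized T).

Record nfa := Nfa {
  anst : nat;
  atrans : 'I_anst -> Sigma -> 'I_anst -> bool;
  ainit : 'I_anst -> bool;
  afinal : 'I_anst -> bool }.

Unset Implicit Arguments.
Inductive arun (M : nfa) : 'I_(anst M) -> word -> 'I_(anst M) -> Prop :=
| arun_nil p : arun M p [::] p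
| arun_step p a q u r : @atrans M p a q -> arun M q u r -> arun M p (a :: u) r.

Set Implicit Arguments.
Definition accepted (M : nfa) (u : word) :=
  exists p q, [/\ @ainit M p, @afinal M q & arun M p u q].

Definition regular (A : word -> Prop) :=
  exists M : nfa, forall u, A u <-> accepted M u.

Definition rprod (R1 R2 : wrel) : wrel := fun u v =>
  exists u1 u2 v1 v2, [/\ u = u1 ++ u2, v = v1 ++ v2, R1 u1 v1 & R2 u2 v2].

Definition left_lam (A : word -> Prop) : wrel := fun u v => A u /\ v = [::].
Definition lam_right (A : word -> Prop) : wrel := fun u v => u = [::] /\ A v.

Definition finite_union_of (P : wrel -> Prop) (R : wrel) :=
  exists (n : nat) (Rs : 'I_n -> wrel),
    (forall i, P (Rs i)) /\ rel_eq R (fun u v => exists i, Rs i u v).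

Definition left_sync_piece (R : wrel) :=
  exists (S : wrel) (A : word -> Prop), [/\ ltl_realized S, regular A &
    (rel_eq R (rprod S (left_lam A)) \/ rel_eq R (rprod S (lam_right A)))].

Definition right_sync_piece (R : wrel) :=
  exists (S : wrel) (A : word -> Prop), [/\ ltl_realized S, regular A &
    (rel_eq R (rprod (left_lam A) S) \/ rel_eq R (rprod (lam_right A) S))].

Definition left_synchronous (R : wrel) := finite_union_of left_sync_piece R.
Definition right_synchronous (R : wrel) := finite_union_of right_sync_piece R.

Definition irreflexive_rel (R : wrel) := forall u, ~ R u u.
Definition asymmetric (A : wrel) := forall x y, A x y -> ~ A y x.

Definition rational_asymmetric_partition (I A B : wrel) :=
  [/\ rational A, rational B, asymmetric A, asymmetric B &
      ((forall u v, ~ (A u v /\ B u v)) /\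
       (forall u v, I u v <-> (A u v \/ B u v)))].

Definition has_rap (I : wrel) := exists A B, rational_asymmetric_partition I A B.

End Rational.

(* Main.v *)
Require Import Defs.
From mathcomp Require Import all_boot.
Set Implicit Arguments. Unset Strict Implicit. Unset Printing Implicit Defensive.

Record gtr (Sigma : finType) := Gtr {
  gK : finType;
  gtt : gK -> option Sigma -> option Sigma -> gK -> bool;
  gi : gK -> bool;
  gf : gK -> bool }.

Unset Implicit Arguments.
Inductive grun (Sigma : finType) (G : gtr Sigma) : gK G -> word Sigma -> word Sigma -> gK G -> Prop :=
| grun_nil p : grun Sigma G p [::] [::] p
| grun_step p x y q u v r :
    @gtt Sigma G p x y q -> grun Sigma G q u v r -> grun Sigma G p (olab x ++ u) (olab y ++ v) r.
Set Implicit Arguments.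
Arguments grun {Sigma} G _ _ _ _.
Arguments grun_nil {Sigma} G p.
Arguments grun_step {Sigma} G p x y q u v r _ _.

Definition grl {Sigma : finType} (G : gtr Sigma) : wrel Sigma :=
  fun u v => exists p q, [/\ gi p, gf q & grun G p u v q].

Definition g2t {Sigma : finType} (G : gtr Sigma) : transducer Sigma :=
  @Transducer Sigma #|gK G| (fun p x y q => gtt (enum_val p) x y (enum_val q))
    (fun p => gi (enum_val p)) (fun p => gf (enum_val p)).

Lemma g2t_run {Sigma : finType} (G : gtr Sigma) p u v q :
  trun _ (g2t G) p u v q <-> grun G (enum_val p) u v (enum_val q).
Proof.
split.
- elim=> [p0|p0 x y q0 u0 v0 r0 Ht _ IH]; first by constructor.
  by apply: grun_step IH.
- move e1: (enum_val p) => p' ; move e2: (enum_val q) => q' H.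
  elim: H p q e1 e2 => [p0|p0 x y q0 u0 v0 r0 Ht _ IH] p1 q1 e1 e2.
  + have -> : p1 = q1 by apply: enum_val_inj; rewrite e1 e2.
    constructor.
  + apply: (@trun_step _ (g2t G) p1 x y (enum_rank q0)).
    * by rewrite /= enum_rankK e1.
    * by apply: IH; rewrite ?enum_rankK.
Qed.

Lemma grel_rational {Sigma : finType} (G : gtr Sigma) : rational (grl G).
Proof.
exists (g2t G) => u v; split.
- case=> p [q [Hp Hq Hr]]; exists (enum_rank p), (enum_rank q).
  by rewrite /= !enum_rankK; split => //; apply/g2t_run; rewrite !enum_rankK.
- case=> p [q [Hp Hq Hr]]; exists (enum_val p), (enum_val q); split => //.
  exact/g2t_run.
Qed.

Definition t2g {Sigma : finType} (T : transducer Sigma) : gtr Sigma :=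
  @Gtr Sigma (ordinal (tnst T)) (@ttrans _ T) (@tinit _ T) (@tfinal _ T).

Lemma t2g_run {Sigma : finType} (T : transducer Sigma) p u v q :
  trun _ T p u v q <-> grun (t2g T) p u v q.
Proof.
split.
- elim=> [p0|p0 x y q0 u0 v0 r0 Ht _ IH]; first by constructor.
  by apply: (@grun_step _ (t2g T) p0 x y q0).
- elim=> [p0|p0 x y q0 u0 v0 r0 Ht _ IH]; first by constructor.
  by apply: trun_step IH.
Qed.

Lemma t2g_rel {Sigma : finType} (T : transducer Sigma) :
  rel_eq (realized T) (grl (t2g T)).
Proof.
move=> u v; split; case=> p [q [Hp Hq Hr]]; exists p, q; split => //; exact/t2g_run.
Qed.

Lemma rel_eq_trans {Sigma : finType} (R1 R2 R3 : wrel Sigma) :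
  rel_eq R1 R2 -> rel_eq R2 R3 -> rel_eq R1 R3.
Proof. move=> H1 H2 u v; split => H; [apply/H2/H1 | apply/H1/H2] => //. Qed.

Lemma rational_ext {Sigma : finType} (R1 R2 : wrel Sigma) :
  rel_eq R1 R2 -> rational R2 -> rational R1.
Proof. by move=> H [T HT]; exists T; apply: rel_eq_trans HT. Qed.

Lemma rational_g {Sigma : finType} (R : wrel Sigma) :
  rational R -> exists G : gtr Sigma, rel_eq R (grl G).
Proof. by case=> T HT; exists (t2g T); apply: rel_eq_trans HT (t2g_rel T). Qed.

Lemma grun_cat {Sigma : finType} (G : gtr Sigma) p u v q u' v' r :
  grun G p u v q -> grun G q u' v' r -> grun G p (u ++ u') (v ++ v') r.
Proof.
elim=> [//|p0 x y q0 u0 v0 r0 Ht _ IH] H.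
rewrite -!catA; exact: grun_step Ht (IH H).
Qed.

Section U.
Context {Sigma : finType}.
Implicit Types (G : gtr Sigma).

Definition gunion G1 G2 : gtr Sigma :=
  @Gtr Sigma (gK G1 + gK G2)%type
   (fun s x y t => match s, t with
       | inl p, inl q => gtt p x y q | inr p, inr q => gtt p x y q | _, _ => false end)
   (fun s => match s with inl p => gi p | inr p => gi p end)
   (fun s => match s with inl p => gf p | inr p => gf p end).

Lemma gunion_runL G1 G2 s u v t : grun (gunion G1 G2) s u v t ->
  forall p, s = inl p -> exists q, t = inl q /\ grun G1 p u v q.
Proof.
elim=> [s0|s0 x y t0 u0 v0 r0 Ht _ IH] p e; subst.
- by exists p; split => //; constructor.
- case: t0 Ht IH => [q|q] //= Ht IH.
  case: (IH q erefl) => q' [-> Hr]; exists q'; split => //.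
  exact: grun_step Ht Hr.
Qed.

Lemma gunion_runR G1 G2 s u v t : grun (gunion G1 G2) s u v t ->
  forall p, s = inr p -> exists q, t = inr q /\ grun G2 p u v q.
Proof.
elim=> [s0|s0 x y t0 u0 v0 r0 Ht _ IH] p e; subst.
- by exists p; split => //; constructor.
- case: t0 Ht IH => [q|q] //= Ht IH.
  case: (IH q erefl) => q' [-> Hr]; exists q'; split => //.
  exact: grun_step Ht Hr.
Qed.

Lemma gunion_inL G1 G2 p u v q : grun G1 p u v q -> grun (gunion G1 G2) (inl p) u v (inl q).
Proof.
elim=> [p0|p0 x y q0 u0 v0 r0 Ht _ IH]; first by constructor.
exact: (@grun_step _ (gunion G1 G2) (inl p0) x y (inl q0)).
Qed.

Lemma gunion_inR G1 G2 p u v q : grun G2 p u v q -> grun (gunion G1 G2) (inr p) u v (inr q).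
Proof.
elim=> [p0|p0 x y q0 u0 v0 r0 Ht _ IH]; first by constructor.
exact: (@grun_step _ (gunion G1 G2) (inr p0) x y (inr q0)).
Qed.

Lemma gunion_rel G1 G2 : rel_eq (grl (gunion G1 G2)) (fun u v => grl G1 u v \/ grl G2 u v).
Proof.
move=> u v; split.
- case=> [[p|p] [t [Hp Ht Hr]]].
  + have [q [e Hq]] := gunion_runL Hr erefl; subst; left; by exists p, q.
  + have [q [e Hq]] := gunion_runR Hr erefl; subst; right; by exists p, q.
- case=> [[p [q [Hp Hq Hr]]]|[p [q [Hp Hq Hr]]]].
  + exists (inl p), (inl q); split => //; exact: gunion_inL.
  + exists (inr p), (inr q); split => //; exact: gunion_inR.
Qed.

Lemma rational_union (R1 R2 : wrel Sigma) : rational R1 -> rational R2 ->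
  rational (fun u v => R1 u v \/ R2 u v).
Proof.
move=> /rational_g [G1 H1] /rational_g [G2 H2].
apply: rational_ext (grel_rational (gunion G1 G2)) => u v.
move: (gunion_rel G1 G2 u v) (H1 u v) (H2 u v); rewrite /iff; tauto.
Qed.


Definition gempty : gtr Sigma :=
  @Gtr Sigma void (fun _ _ _ _ => false) (fun _ => false) (fun _ => false).

Lemma rational_empty : rational (fun u v : word Sigma => False).
Proof.
apply: rational_ext (grel_rational gempty) => u v; split => //.
by case=> [[]].
Qed.

Lemma rational_bigunion n (Rs : 'I_n -> wrel Sigma) :
  (forall i, rational (Rs i)) -> rational (fun u v => exists i, Rs i u v).
Proof.
elim: n Rs => [|n IH] Rs H.
- apply: rational_ext rational_empty => u v; split => //.
  by case=> [[m Hm] _].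
- apply: rational_ext (rational_union (H ord0) (IH (fun i => Rs (lift ord0 i)) (fun i => H _))).
  move=> u v; split.
  + case=> i Hi; case: (unliftP ord0 i) Hi => [j ->|->] Hi; [right; by exists j | by left].
  + case=> [H0|[j Hj]]; [by exists ord0 | by exists (lift ord0 j)].
Qed.

Definition gcat G1 G2 : gtr Sigma :=
  @Gtr Sigma (gK G1 + gK G2)%type
   (fun s x y t => match s, t with
       | inl p, inl q => gtt p x y q | inr p, inr q => gtt p x y q
       | inl p, inr q => [&& x == None, y == None, gf p & gi q]
       | _, _ => false end)
   (fun s => match s with inl p => gi p | inr p => false end)
   (fun s => match s with inl p => false | inr p => gf p end).

Lemma gcat_runR G1 G2 s u v t : grun (gcat G1 G2) s u v t ->
  forall p, s = inr p -> exists q, t = inr q /\ grun G2 p u v q.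
Proof.
elim=> [s0|s0 x y t0 u0 v0 r0 Ht _ IH] p e; subst.
- by exists p; split => //; constructor.
- case: t0 Ht IH => [q|q] //= Ht IH.
  case: (IH q erefl) => q' [-> Hr]; exists q'; split => //.
  exact: grun_step Ht Hr.
Qed.

Lemma gcat_runL G1 G2 s u v t : grun (gcat G1 G2) s u v t ->
  forall p q, s = inl p -> t = inr q -> exists p1 q2 u1 u2 v1 v2,
   [/\ u = u1 ++ u2, v = v1 ++ v2, grun G1 p u1 v1 p1, gf p1 & gi q2 /\ grun G2 q2 u2 v2 q].
Proof.
elim=> [s0|s0 x y t0 u0 v0 r0 Ht Hr IH] p q e1 e2; subst => //.
case: t0 Ht IH Hr => [q0|q0] //= Ht IH Hr.
- case: (IH q0 q erefl erefl) => p1 [q2 [u1 [u2 [v1 [v2 [-> -> H1 H2 H3]]]]]].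
  exists p1, q2, (olab x ++ u1), u2, (olab y ++ v1), v2; rewrite !catA; split => //.
  exact: grun_step Ht H1.
- case/and4P: Ht => /eqP -> /eqP -> Hp Hq.
  case: (gcat_runR Hr erefl) => q' [[<-] H2].
  exists p, q0, [::], u0, [::], v0; split => //; constructor.
Qed.

Lemma gcat_inL G1 G2 p u v q : grun G1 p u v q -> grun (gcat G1 G2) (inl p) u v (inl q).
Proof.
elim=> [p0|p0 x y q0 u0 v0 r0 Ht _ IH]; first by constructor.
exact: (@grun_step _ (gcat G1 G2) (inl p0) x y (inl q0)).
Qed.

Lemma gcat_inR G1 G2 p u v q : grun G2 p u v q -> grun (gcat G1 G2) (inr p) u v (inr q).
Proof.
elim=> [p0|p0 x y q0 u0 v0 r0 Ht _ IH]; first by constructor.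
exact: (@grun_step _ (gcat G1 G2) (inr p0) x y (inr q0)).
Qed.

Lemma gcat_rel G1 G2 : rel_eq (grl (gcat G1 G2)) (rprod (grl G1) (grl G2)).
Proof.
move=> u v; split.
- case=> [[p|p] [[t|t] [Hp Ht Hr]]] //.
  have [p1 [q2 [u1 [u2 [v1 [v2 [-> -> H1 H2 [H3 H4]]]]]]]] := gcat_runL Hr erefl erefl.
  exists u1, u2, v1, v2; split => //; [by exists p, p1 | by exists q2, t].
- case=> u1 [u2 [v1 [v2 [-> -> [p [p1 [Hp Hp1 H1]]] [q2 [t [Hq2 Ht H2]]]]]]].
  exists (inl p), (inr t); split => //.
  apply: grun_cat (gcat_inL G2 H1) _.
  have -> : u2 = olab None ++ u2 by [].
  have -> : v2 = olab None ++ v2 by [].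
  apply: (@grun_step _ (gcat G1 G2) (inl p1) None None (inr q2)); first by rewrite /= Hp1 Hq2.
  exact: gcat_inR.
Qed.

Lemma rational_rprod (R1 R2 : wrel Sigma) : rational R1 -> rational R2 ->
  rational (rprod R1 R2).
Proof.
move=> /rational_g [G1 H1] /rational_g [G2 H2].
apply: rational_ext (grel_rational (gcat G1 G2)) => u v.
move: (gcat_rel G1 G2 u v); rewrite /iff => H; split => [Hr|Hg].
- apply H; case: Hr => u1 [u2 [v1 [v2 [-> -> Ha Hb]]]].
  by exists u1, u2, v1, v2; split => //; [apply/H1 | apply/H2].
- case: (proj1 H Hg) => u1 [u2 [v1 [v2 [-> -> Ha Hb]]]].
  by exists u1, u2, v1, v2; split => //; [apply/H1 | apply/H2].
Qed.

End U.

Section C.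
Context {Sigma : finType}.
Implicit Types (G : gtr Sigma).

Fixpoint fold_cmp (step : option bool -> Sigma -> Sigma -> option bool)
  (c : option bool) (u v : word Sigma) : option bool :=
  match u, v with a :: u', b :: v' => fold_cmp step (step c a b) u' v' | _, _ => c end.

Definition gltl G := forall p x y q, @gtt _ G p x y q -> exists a b, x = Some a /\ y = Some b.

Definition gcmp G step (F : pred (option bool)) : gtr Sigma :=
  @Gtr Sigma (gK G * option bool)%type
   (fun s x y t => gtt s.1 x y t.1 &&
       match x, y with Some a, Some b => t.2 == step s.2 a b | _, _ => false end)
   (fun s => gi s.1 && (s.2 == None))
   (fun s => gf s.1 && F s.2).

Lemma gcmp_run1 G step F s u v t : grun (gcmp G step F) s u v t ->
  grun G s.1 u v t.1 /\ t.2 = fold_cmp step s.2 u v.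
Proof.
elim=> [s0|s0 x y t0 u0 v0 r0 Ht _ [IH1 IH2]]; first by split => //; constructor.
case/andP: Ht => Ht; case: x Ht => [a|] Ht; case: y Ht => [b|] Ht //= /eqP E.
split; first exact: (@grun_step _ G s0.1 (Some a) (Some b) t0.1 u0 v0 _ Ht IH1).
by rewrite IH2 E.
Qed.

Lemma gcmp_run2 G step F p u v q : gltl G -> grun G p u v q ->
  forall c, grun (gcmp G step F) (p, c) u v (q, fold_cmp step c u v).
Proof.
move=> Hl; elim=> [p0|p0 x y q0 u0 v0 r0 Ht _ IH] c; first by constructor.
have [a [b [Ex Ey]]] := Hl _ _ _ _ Ht; subst.
apply: (@grun_step _ (gcmp G step F) (p0, c) (Some a) (Some b) (q0, step c a b)).
  by rewrite /= Ht eqxx.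
exact: IH.
Qed.

Lemma gcmp_rel G step F : gltl G ->
  rel_eq (grl (gcmp G step F)) (fun u v => grl G u v /\ F (fold_cmp step None u v)).
Proof.
move=> Hl u v; split.
- case=> [[p c] [[q c'] [/andP [Hp /eqP /= Ec] /andP [Hq Hc] Hr]]].
  have [H1 /= H2] := gcmp_run1 Hr; subst.
  by split => //; exists p, q.
- case=> [[p [q [Hp Hq Hr]]] HF].
  exists (p, None), (q, fold_cmp step None u v); split => //=.
  + by rewrite Hp eqxx.
  + by rewrite Hq HF.
  + exact: gcmp_run2.
Qed.

Lemma grun_size G p u v q : gltl G -> grun G p u v q -> size u = size v.
Proof.
move=> Hl; elim=> [//|p0 x y q0 u0 v0 r0 Ht _ IH].
by have [a [b [-> ->]]] := Hl _ _ _ _ Ht; rewrite /= IH.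
Qed.

Lemma ltl_size (S : wrel Sigma) u v : ltl_realized S -> S u v -> size u = size v.
Proof.
case=> T [Hl HS] /HS [p [q [_ _ Hr]]].
apply: (@grun_size (t2g T) p _ _ q); last exact/t2g_run.
exact: Hl.
Qed.

Lemma rational_cmp (S : wrel Sigma) step (F : pred (option bool)) : ltl_realized S ->
  rational (fun u v => S u v /\ F (fold_cmp step None u v)).
Proof.
case=> T [Hl HS].
have Hl' : gltl (t2g T) by move=> p x y q; apply: Hl.
apply: rational_ext (grel_rational (gcmp (t2g T) step F)) => u v.
move: (gcmp_rel step F Hl' u v) (t2g_rel T u v) (HS u v); rewrite /iff; tauto.
Qed.

Definition gnL (M : nfa Sigma) : gtr Sigma :=
  @Gtr Sigma (ordinal (anst M))
   (fun p x y q => match x, y with Some a, None => atrans p a q | _, _ => false end)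
   (@ainit _ M) (@afinal _ M).

Definition gnR (M : nfa Sigma) : gtr Sigma :=
  @Gtr Sigma (ordinal (anst M))
   (fun p x y q => match x, y with None, Some a => atrans p a q | _, _ => false end)
   (@ainit _ M) (@afinal _ M).

Lemma gnL_run1 M p u v q : grun (gnL M) p u v q -> v = [::] /\ arun _ M p u q.
Proof.
elim=> [p0|p0 x y q0 u0 v0 r0 Ht _ [IH1 IH2]]; first by split => //; constructor.
case: x Ht => [a|] Ht; case: y Ht => [b|] Ht //=; subst; split => //.
exact: arun_step Ht IH2.
Qed.

Lemma gnL_run2 M p u q : arun _ M p u q -> grun (gnL M) p u [::] q.
Proof.
elim=> [p0|p0 a q0 u0 r0 Ht _ IH]; first by constructor.
exact: (@grun_step _ (gnL M) p0 (Some a) None q0 u0 [::] r0).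
Qed.

Lemma gnR_run1 M p u v q : grun (gnR M) p u v q -> u = [::] /\ arun _ M p v q.
Proof.
elim=> [p0|p0 x y q0 u0 v0 r0 Ht _ [IH1 IH2]]; first by split => //; constructor.
case: x Ht => [a|] Ht; case: y Ht => [b|] Ht //=; subst; split => //.
exact: arun_step Ht IH2.
Qed.

Lemma gnR_run2 M p u q : arun _ M p u q -> grun (gnR M) p [::] u q.
Proof.
elim=> [p0|p0 a q0 u0 r0 Ht _ IH]; first by constructor.
exact: (@grun_step _ (gnR M) p0 None (Some a) q0 [::] u0 r0).
Qed.

Lemma rational_left_lam (C : word Sigma -> Prop) : regular C -> rational (left_lam C).
Proof.
case=> M HM; apply: rational_ext (grel_rational (gnL M)) => u v; split.
- case=> /HM [p [q [Hp Hq Hr]]] ->; exists p, q; split => //; exact: gnL_run2.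
- case=> p [q [Hp Hq /gnL_run1 [-> Hr]]]; split => //; apply/HM; by exists p, q.
Qed.

Lemma rational_lam_right (C : word Sigma -> Prop) : regular C -> rational (lam_right C).
Proof.
case=> M HM; apply: rational_ext (grel_rational (gnR M)) => u v; split.
- case=> -> /HM [p [q [Hp Hq Hr]]]; exists p, q; split => //; exact: gnR_run2.
- case=> p [q [Hp Hq /gnR_run1 [-> Hr]]]; split => //; apply/HM; by exists p, q.
Qed.

End C.

Section L.
Context {Sigma : finType}.

Definition ltS (a b : Sigma) := (enum_rank a < enum_rank b)%N.

Fixpoint lexlt (u v : word Sigma) : bool :=
  match u, v with
  | [::], [::] => false
  | [::], _ :: _ => true
  | _ :: _, [::] => false
  | a :: u', b :: v' => if a == b then lexlt u' v' else ltS a b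
  end.

Lemma ltS_asym a b : ltS a b -> ~~ ltS b a.
Proof. by rewrite /ltS -leqNgt => /ltnW. Qed.

Lemma ltS_total a b : a != b -> ltS a b || ltS b a.
Proof.
move=> ne; have : enum_rank a != enum_rank b by rewrite (inj_eq enum_rank_inj).
by rewrite neq_ltn.
Qed.

Lemma lexlt_asym u v : lexlt u v -> ~~ lexlt v u.
Proof.
elim: u v => [|a u IH] [|b v] //=.
case: (eqVneq a b) => [_|ne]; first exact: IH.
exact: ltS_asym.
Qed.

Lemma lexlt_total u v : u != v -> lexlt u v || lexlt v u.
Proof.
elim: u v => [|a u IH] [|b v] //=.
case: (eqVneq a b) => [->|ne].
- by rewrite eqseq_cons eqxx /=; apply: IH.
- by move=> _; apply: ltS_total.
Qed.

Definition stepF (c : option bool) (a b : Sigma) :=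
  if c is Some x then Some x else (if a == b then None else Some (ltS a b)).
Definition stepL (c : option bool) (a b : Sigma) :=
  if a == b then c else Some (ltS a b).

Notation fF := (fold_cmp stepF None).
Notation fL := (fold_cmp stepL None).

Lemma foldF_Some x u v : fold_cmp stepF (Some x) u v = Some x.
Proof. by elim: u v => [|a u IH] [|b v] //=. Qed.

Lemma lexlt_cat u1 v1 u2 v2 : size u1 = size v1 ->
  lexlt (u1 ++ u2) (v1 ++ v2) = match fF u1 v1 with Some b => b | None => lexlt u2 v2 end.
Proof.
elim: u1 v1 => [|a u1 IH] [|b v1] //= [Hs].
rewrite /stepF; case: (a == b); first exact: IH.
by rewrite foldF_Some.
Qed.

Lemma fF_none u1 v1 : size u1 = size v1 -> fF u1 v1 = None -> u1 = v1.
Proof.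
elim: u1 v1 => [|a u1 IH] [|b v1] //= [Hs].
rewrite /stepF; case: (eqVneq a b) => [->|ne]; last by rewrite foldF_Some.
by move/(IH _ Hs) ->.
Qed.

Lemma keyL u1 v1 u2 : size u1 = size v1 ->
  lexlt (u1 ++ u2) (v1 ++ [::]) = (fF u1 v1 == Some true).
Proof.
move=> Hs; rewrite lexlt_cat //; case: (fF u1 v1) => [[]|] //.
by case: u2.
Qed.

Lemma keyR u1 v1 v2 : size u1 = size v1 -> u1 ++ [::] <> v1 ++ v2 ->
  lexlt (u1 ++ [::]) (v1 ++ v2) = (fF u1 v1 != Some false).
Proof.
move=> Hs Hne; rewrite lexlt_cat //; case E: (fF u1 v1) => [[]|] //.
have Eu := fF_none Hs E; subst; case: v2 Hne => //.
Qed.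

Lemma fL_acc c u v : size u = size v ->
  fold_cmp stepL c u v = match fL u v with None => c | Some x => Some x end.
Proof.
elim: u v c => [|a u IH] [|b v] c //= [Hs].
rewrite (IH v (stepL c a b)) // (IH v (stepL None a b)) //; rewrite /stepL; by case: (a == b); case: (fold_cmp _ None u v).
Qed.

Lemma fF_cat c u1 v1 u2 v2 : size u1 = size v1 ->
  fold_cmp stepF c (u1 ++ u2) (v1 ++ v2) = fold_cmp stepF (fold_cmp stepF c u1 v1) u2 v2.
Proof. by elim: u1 v1 c => [|a u1 IH] [|b v1] c //= [Hs]; apply: IH. Qed.

Lemma fF_rev u v : size u = size v -> fF (rev u) (rev v) = fL u v.
Proof.
elim: u v => [|a u IH] [|b v] // [Hs].
rewrite !rev_cons -!cats1 fF_cat ?size_rev // IH //= (fL_acc (stepL None a b)) //.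
Qed.

Lemma piece_gen (S X : wrel Sigma) step (Fm : pred (option bool))
  (Q : word Sigma -> word Sigma -> bool) :
  ltl_realized S -> rational X ->
  (forall u1 v1 u2 v2, S u1 v1 -> X u2 v2 -> u1 ++ u2 <> v1 ++ v2 ->
     Q (u1 ++ u2) (v1 ++ v2) = Fm (fold_cmp step None u1 v1)) ->
  (forall u, ~ rprod S X u u) ->
  rational (fun u v => rprod S X u v /\ Q u v).
Proof.
move=> HS HX HQ Hirr.
apply: rational_ext (rational_rprod (rational_cmp step Fm HS) HX) => u v; split.
- case=> [[u1 [u2 [v1 [v2 [-> -> H1 H2]]]]] Hq].
  have Hne : u1 ++ u2 <> v1 ++ v2.
    by move=> E; apply: (Hirr (u1 ++ u2)); exists u1, u2, v1, v2; rewrite -E.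
  exists u1, u2, v1, v2; split => //; split => //; by rewrite -(HQ _ _ _ _ H1 H2 Hne).
- case=> u1 [u2 [v1 [v2 [-> -> [H1 Hf] H2]]]].
  have Hne : u1 ++ u2 <> v1 ++ v2.
    by move=> E; apply: (Hirr (u1 ++ u2)); exists u1, u2, v1, v2; rewrite -E.
  split; first by exists u1, u2, v1, v2.
  by rewrite (HQ _ _ _ _ H1 H2 Hne).
Qed.

Lemma piece_genR (S X : wrel Sigma) step (Fm : pred (option bool))
  (Q : word Sigma -> word Sigma -> bool) :
  ltl_realized S -> rational X ->
  (forall u1 v1 u2 v2, S u1 v1 -> X u2 v2 -> u2 ++ u1 <> v2 ++ v1 ->
     Q (u2 ++ u1) (v2 ++ v1) = Fm (fold_cmp step None u1 v1)) ->
  (forall u, ~ rprod X S u u) ->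
  rational (fun u v => rprod X S u v /\ Q u v).
Proof.
move=> HS HX HQ Hirr.
apply: rational_ext (rational_rprod HX (rational_cmp step Fm HS)) => u v; split.
- case=> [[u2 [u1 [v2 [v1 [-> -> H2 H1]]]]] Hq].
  have Hne : u2 ++ u1 <> v2 ++ v1.
    by move=> E; apply: (Hirr (u2 ++ u1)); exists u2, u1, v2, v1; rewrite -E.
  exists u2, u1, v2, v1; split => //; split => //; by rewrite -(HQ _ _ _ _ H1 H2 Hne).
- case=> u2 [u1 [v2 [v1 [-> -> H2 [H1 Hf]]]]].
  have Hne : u2 ++ u1 <> v2 ++ v1.
    by move=> E; apply: (Hirr (u2 ++ u1)); exists u2, u1, v2, v1; rewrite -E.
  split; first by exists u2, u1, v2, v1.
  by rewrite (HQ _ _ _ _ H1 H2 Hne).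
Qed.

End L.

Section M.
Context {Sigma : finType}.

Lemma left_piece (P : wrel Sigma) : left_sync_piece P -> irreflexive_rel P ->
  rational (fun u v => P u v /\ lexlt u v) /\ rational (fun u v => P u v /\ ~~ lexlt u v).
Proof.
case=> S [C [HS HC HP]] Hirr0.
have Hsz := fun u v => @ltl_size _ S u v HS.
case: HP => HP.
- have Hirr : forall u, ~ rprod S (left_lam C) u u by move=> u /HP /Hirr0.
  have HX := rational_left_lam HC.
  split.
  + apply: rational_ext (@piece_gen _ S (left_lam C) stepF (fun c => c == Some true) lexlt HS HX _ Hirr).
    * move=> u v; move: (HP u v); rewrite /iff; tauto.
    * move=> u1 v1 u2 v2 H1 [H2 ->] _; exact: keyL (Hsz _ _ H1).
  + apply: rational_ext (@piece_gen _ S (left_lam C) stepF (fun c => c != Some true)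
        (fun u v => ~~ lexlt u v) HS HX _ Hirr).
    * move=> u v; move: (HP u v); rewrite /iff; tauto.
    * move=> u1 v1 u2 v2 H1 [H2 ->] _; by rewrite keyL // (Hsz _ _ H1).
- have Hirr : forall u, ~ rprod S (lam_right C) u u by move=> u /HP /Hirr0.
  have HX := rational_lam_right HC.
  split.
  + apply: rational_ext (@piece_gen _ S (lam_right C) stepF (fun c => c != Some false) lexlt HS HX _ Hirr).
    * move=> u v; move: (HP u v); rewrite /iff; tauto.
    * move=> u1 v1 u2 v2 H1 [-> H2] Hne; exact: keyR (Hsz _ _ H1) Hne.
  + apply: rational_ext (@piece_gen _ S (lam_right C) stepF (fun c => c == Some false)
        (fun u v => ~~ lexlt u v) HS HX _ Hirr).
    * move=> u v; move: (HP u v); rewrite /iff; tauto.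
    * move=> u1 v1 u2 v2 H1 [-> H2] Hne; by rewrite keyR ?negbK // (Hsz _ _ H1).
Qed.

Definition rlt (u v : word Sigma) := lexlt (rev u) (rev v).

Lemma right_piece (P : wrel Sigma) : right_sync_piece P -> irreflexive_rel P ->
  rational (fun u v => P u v /\ rlt u v) /\ rational (fun u v => P u v /\ ~~ rlt u v).
Proof.
case=> S [C [HS HC HP]] Hirr0.
have Hsz := fun u v => @ltl_size _ S u v HS.
case: HP => HP.
- have Hirr : forall u, ~ rprod (left_lam C) S u u by move=> u /HP /Hirr0.
  have HX := rational_left_lam HC.
  have K : forall u1 v1 u2 v2, S u1 v1 -> left_lam C u2 v2 ->
      rlt (u2 ++ u1) (v2 ++ v1) = (fold_cmp stepL None u1 v1 == Some true).
    move=> u1 v1 u2 v2 H1 [H2 ->]; rewrite /rlt cat0s rev_cat -(cats0 (rev v1)) keyL ?size_rev ?(Hsz _ _ H1) //.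
    by rewrite fF_rev // (Hsz _ _ H1).
  split.
  + apply: rational_ext (@piece_genR _ S (left_lam C) stepL (fun c => c == Some true) rlt HS HX _ Hirr).
    * move=> u v; move: (HP u v); rewrite /iff; tauto.
    * by move=> u1 v1 u2 v2 H1 H2 _; apply: K.
  + apply: rational_ext (@piece_genR _ S (left_lam C) stepL (fun c => c != Some true)
        (fun u v => ~~ rlt u v) HS HX _ Hirr).
    * move=> u v; move: (HP u v); rewrite /iff; tauto.
    * by move=> u1 v1 u2 v2 H1 H2 _; rewrite K.
- have Hirr : forall u, ~ rprod (lam_right C) S u u by move=> u /HP /Hirr0.
  have HX := rational_lam_right HC.
  have K : forall u1 v1 u2 v2, S u1 v1 -> lam_right C u2 v2 -> u2 ++ u1 <> v2 ++ v1 ->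
      rlt (u2 ++ u1) (v2 ++ v1) = (fold_cmp stepL None u1 v1 != Some false).
    move=> u1 v1 u2 v2 H1 [-> H2] Hne; rewrite /rlt cat0s rev_cat -(cats0 (rev u1)) keyR ?size_rev ?(Hsz _ _ H1) //.
      by rewrite fF_rev // (Hsz _ _ H1).
    rewrite cats0 => E; apply: Hne; rewrite cat0s.
    by move/(congr1 rev): E; rewrite revK rev_cat !revK.
  split.
  + apply: rational_ext (@piece_genR _ S (lam_right C) stepL (fun c => c != Some false) rlt HS HX _ Hirr).
    * move=> u v; move: (HP u v); rewrite /iff; tauto.
    * by move=> u1 v1 u2 v2 H1 H2 Hne; apply: K.
  + apply: rational_ext (@piece_genR _ S (lam_right C) stepL (fun c => c == Some false)
        (fun u v => ~~ rlt u v) HS HX _ Hirr).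
    * move=> u v; move: (HP u v); rewrite /iff; tauto.
    * by move=> u1 v1 u2 v2 H1 H2 Hne; rewrite K ?negbK.
Qed.

Lemma rap_of (R : wrel Sigma) (lt : word Sigma -> word Sigma -> bool) :
  (forall u v, lt u v -> ~~ lt v u) -> (forall u v, u != v -> lt u v || lt v u) ->
  irreflexive_rel R ->
  rational (fun u v => R u v /\ lt u v) -> rational (fun u v => R u v /\ ~~ lt u v) ->
  has_rap R.
Proof.
move=> Has Htot Hirr HA HB.
exists (fun u v => R u v /\ lt u v), (fun u v => R u v /\ ~~ lt u v); split => //.
- by move=> x y [_ h] [_ h']; move: (Has _ _ h); rewrite h'.
- move=> x y [Hr h] [_ h'].
  have : x != y by apply/eqP => E; subst; apply: (Hirr y).
  by move/Htot; rewrite (negbTE h) (negbTE h').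
- split.
  + by move=> u v [[_ h] [_ h']]; rewrite h in h'.
  + move=> u v; split.
    * by move=> Hr; case E: (lt u v); [left|right]; split => //; rewrite E.
    * by case=> [[]|[]].
Qed.

Lemma union_Q (R : wrel Sigma) n (Rs : 'I_n -> wrel Sigma) (Q : word Sigma -> word Sigma -> Prop) :
  rel_eq R (fun u v => exists i, Rs i u v) ->
  (forall i, rational (fun u v => Rs i u v /\ Q u v)) ->
  rational (fun u v => R u v /\ Q u v).
Proof.
move=> HR H; apply: rational_ext (rational_bigunion H) => u v; split.
- by case=> /HR [i Hi] Hq; exists i.
- by case=> i [Hi Hq]; split => //; apply/HR; exists i.
Qed.

End M.

Theorem corollary1 (Sigma : finType) (R : wrel Sigma) :
  irreflexive_rel R ->
  (left_synchronous R \/ right_synchronous R) ->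
  has_rap R.
Proof.
move=> Hirr [[n [Rs [HP HR]]]|[n [Rs [HP HR]]]].
- have Hirri : forall i, irreflexive_rel (Rs i).
    by move=> i u Hu; apply: (Hirr u); apply/HR; exists i.
  apply: (@rap_of _ R lexlt) => //.
  + exact: lexlt_asym.
  + exact: lexlt_total.
  + exact: (union_Q (Q := fun u v => lexlt u v) HR (fun i => proj1 (left_piece (HP i) (Hirri i)))).
  + exact: (union_Q (Q := fun u v => ~~ lexlt u v) HR (fun i => proj2 (left_piece (HP i) (Hirri i)))).
- have Hirri : forall i, irreflexive_rel (Rs i).
    by move=> i u Hu; apply: (Hirr u); apply/HR; exists i.
  apply: (@rap_of _ R rlt) => //.
  + move=> u v; exact: lexlt_asym.
  + by move=> u v ne; apply: lexlt_total; rewrite (can_eq revK).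
  + exact: (union_Q (Q := fun u v => rlt u v) HR (fun i => proj1 (right_piece (HP i) (Hirri i)))).
  + exact: (union_Q (Q := fun u v => ~~ rlt u v) HR (fun i => proj2 (right_piece (HP i) (Hirri i)))).
Qed.
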